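(* Let $X$ be a complete CAT(1) space with $\mathrm{Diam}(X)<\pi/2$ and $T\colon X\to X$ a firmly vicinal mapping. Then for each $x\in X$, $\{T^nx\}$ is $\Delta$-convergent to an element of $\mathrm{Fix}(T)$.
   Context: A CAT(1) space is a $\pi$-geodesic metric space in which every geodesic triangle of perimeter $<2\pi$ satisfies the CAT(1) comparison inequality relative to comparison triangles in the unit sphere $\mathbb S^2$. $\{x_n\}$ is $\Delta$-convergent to $p$ if for every subsequence $\{x_{n_i}\}$, $p$ is the unique point $z$ minimizing $\limsup_i d(x_{n_i},z)$. With $C_z=\cos d(Tz,z)$, $T$ is firmly vicinal if for all $x,y\in X$: $\bigl(C_x^2(1+C_y^2)C_y+C_y^2(1+C_x^2)C_x\bigr)\cos d(Tx,Ty)\ge C_x^2(1+C_y^2)\cos d(Tx,y)+C_y^2(1+C_x^2)\cos d(Ty,x)$. *)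

(* Defs.v *)
From Stdlib Require Import Reals Lra.
Open Scope R_scope.

Section Defs.
Context {X : Type} (d : X -> X -> R).

Definition is_metric : Prop :=
  (forall x y, 0 <= d x y) /\
  (forall x y, d x y = 0 <-> x = y) /\
  (forall x y, d x y = d y x) /\
  (forall x y z, d x z <= d x y + d y z).

Definition geodesic (x y : X) (g : R -> X) : Prop :=
  g 0 = x /\ g (d x y) = y /\
  forall s t, 0 <= s <= d x y -> 0 <= t <= d x y -> d (g s) (g t) = Rabs (s - t).

Definition pi_geodesic : Prop :=
  forall x y, d x y < PI -> exists g, geodesic x y g.

End Defs.

Definition R3 : Type := (R * R * R)%type.
Definition dot3 (a b : R3) : R :=
  let '(a1, a2, a3) := a in let '(b1, b2, b3) := b in a1 * b1 + a2 * b2 + a3 * b3.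
Definition on_S2 (a : R3) : Prop := dot3 a a = 1.
Definition dS2 (a b : R3) : R := acos (dot3 a b).

Section CAT1.
Context {X : Type} (d : X -> X -> R).

(** [u] lies on the side (a,b) of a triangle, parametrised by the geodesic g,
    and [ub] is its comparison point on the side (ab,bb) of the comparison
    triangle in S^2. *)
Definition side_point (a b : X) (g : R -> X) (ab bb : R3) (u : X) (ub : R3) : Prop :=
  exists t, 0 <= t <= d a b /\ u = g t /\ on_S2 ub /\
    dS2 ab ub = t /\ dS2 ub bb = d a b - t.

Definition tri_point (p q r : X) (gpq gqr grp : R -> X) (pb qb rb : R3)
  (u : X) (ub : R3) : Prop :=
  side_point p q gpq pb qb u ub \/ side_point q r gqr qb rb u ub \/
  side_point r p grp rb pb u ub.

Definition CAT1_inequality : Prop :=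
  forall (p q r : X) (gpq gqr grp : R -> X),
    geodesic d p q gpq -> geodesic d q r gqr -> geodesic d r p grp ->
    d p q + d q r + d r p < 2 * PI ->
    forall pb qb rb : R3,
      on_S2 pb -> on_S2 qb -> on_S2 rb ->
      dS2 pb qb = d p q -> dS2 qb rb = d q r -> dS2 rb pb = d r p ->
      forall u v ub vb,
        tri_point p q r gpq gqr grp pb qb rb u ub ->
        tri_point p q r gpq gqr grp pb qb rb v vb ->
        d u v <= dS2 ub vb.

Definition CAT1_space : Prop := is_metric d /\ pi_geodesic d /\ CAT1_inequality.

Definition cauchy (x : nat -> X) : Prop :=
  forall eps, 0 < eps -> exists N, forall m n, (N <= m)%nat -> (N <= n)%nat ->
    d (x m) (x n) < eps.
Definition converges_to (x : nat -> X) (p : X) : Prop :=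
  forall eps, 0 < eps -> exists N, forall n, (N <= n)%nat -> d (x n) p < eps.
Definition complete : Prop :=
  forall x : nat -> X, cauchy x -> exists p, converges_to x p.

Definition diam_lt (c : R) : Prop :=
  exists c', c' < c /\ forall x y, d x y <= c'.

Definition is_limsup (a : nat -> R) (L : R) : Prop :=
  forall eps, 0 < eps ->
    (exists N, forall n, (N <= n)%nat -> a n < L + eps) /\
    (forall N, exists n, (N <= n)%nat /\ L - eps < a n).

Definition subseq_index (phi : nat -> nat) : Prop :=
  forall n, (phi n < phi (S n))%nat.

Definition unique_asymptotic_center (y : nat -> X) (p : X) : Prop :=
  exists Lp, is_limsup (fun n => d (y n) p) Lp /\
    forall z, z <> p -> forall Lz, is_limsup (fun n => d (y n) z) Lz -> Lp < Lz.

Definition Delta_convergent (x : nat -> X) (p : X) : Prop :=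
  forall phi, subseq_index phi -> unique_asymptotic_center (fun i => x (phi i)) p.

Definition firmly_vicinal (T : X -> X) : Prop :=
  forall x y : X,
    let Cx := cos (d (T x) x) in
    let Cy := cos (d (T y) y) in
    (Cx ^ 2 * (1 + Cy ^ 2) * Cy + Cy ^ 2 * (1 + Cx ^ 2) * Cx) * cos (d (T x) (T y))
    >= Cx ^ 2 * (1 + Cy ^ 2) * cos (d (T x) y) + Cy ^ 2 * (1 + Cx ^ 2) * cos (d (T y) x).

End CAT1.

(* Main.v *)
Require Import Defs.
From Stdlib Require Import Reals Lra Lia Psatz Classical IndefiniteDescription.
Open Scope R_scope.

Definition LB (a : nat -> R) (M : R) : Prop :=
  forall e, 0 < e -> exists N, forall n, (N <= n)%nat -> M - e < a n.
Definition isli (a : nat -> R) (L : R) : Prop := is_lub (LB a) L.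

Lemma LB_ex (a : nat -> R) lo hi : (forall n, lo <= a n <= hi) -> exists L, isli a L.
Proof.
  intros Hb.
  assert (Hub : forall M, LB a M -> M <= hi).
  { intros M HM. destruct (Rle_dec M hi) as [h|h]; auto.
    destruct (HM (M - hi)) as [N HN]; [lra|]. specialize (HN N (le_n _)).
    specialize (Hb N). lra. }
  destruct (completeness (LB a)) as [L HL].
  - exists hi. intros M HM. now apply Hub.
  - exists lo. intros e he. exists O. intros n _. specialize (Hb n). lra.
  - exists L. exact HL.
Qed.

Lemma isli_LB a L : isli a L -> LB a L.
Proof.
  intros [Hu Hl] e he.
  assert (exists M, LB a M /\ L - e/2 < M) as [M [HM HM2]].
  { apply NNPP. intro Hn. assert (L <= L - e/2); [|lra].
    apply Hl. intros M HM. apply Rnot_lt_le. intro Hlt. apply Hn. exists M; auto. }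
  destruct (HM (e/2)) as [N HN]; [lra|]. exists N. intros n Hn. specialize (HN n Hn). lra.
Qed.

Lemma isli_max a L M : isli a L -> LB a M -> M <= L.
Proof. intros [Hu _] HM. now apply Hu. Qed.

Lemma isli_unique a L1 L2 : isli a L1 -> isli a L2 -> L1 = L2.
Proof.
  intros H1 H2. apply Rle_antisym.
  - apply (isli_max a L2 L1 H2). now apply isli_LB.
  - apply (isli_max a L1 L2 H1). now apply isli_LB.
Qed.

Lemma isli_bounds a L lo hi : (forall n, lo <= a n <= hi) -> isli a L -> lo <= L <= hi.
Proof.
  intros Hb HL. split.
  - apply (isli_max a L lo HL). intros e he. exists O. intros n _. specialize (Hb n). lra.
  - destruct (Rle_dec L hi) as [h|h]; auto.
    destruct (isli_LB a L HL (L - hi)) as [N HN]; [lra|]. specialize (HN N (le_n _)).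
    specialize (Hb N). lra.
Qed.

Lemma isli_freq a L : isli a L -> forall e, 0 < e -> forall N, exists n, (N <= n)%nat /\ a n < L + e.
Proof.
  intros HL e he N. apply NNPP. intro Hn.
  assert (L + e <= L); [|lra].
  apply (isli_max a L (L+e) HL). intros e' he'. exists N. intros n Hn'.
  destruct (Rlt_dec (a n) (L + e)) as [h|h].
  - exfalso. apply Hn. exists n. auto.
  - lra.
Qed.

Lemma LB_mono (a b : nat -> R) M :
  (exists N, forall n, (N <= n)%nat -> b n <= a n) -> LB b M -> LB a M.
Proof.
  intros [N0 H0] HM e he. destruct (HM e he) as [N HN]. exists (max N0 N).
  intros n Hn. specialize (H0 n ltac:(lia)). specialize (HN n ltac:(lia)). lra.
Qed.

Lemma LB_eps (a : nat -> R) M : (forall e, 0 < e -> LB a (M - e)) -> LB a M.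
Proof.
  intros H e he. destruct (H (e/2) ltac:(lra) (e/2) ltac:(lra)) as [N HN].
  exists N. intros n Hn. specialize (HN n Hn). lra.
Qed.

Lemma LB_plus a b M1 M2 : LB a M1 -> LB b M2 -> LB (fun n => a n + b n) (M1 + M2).
Proof.
  intros H1 H2 e he. destruct (H1 (e/2) ltac:(lra)) as [N1 HN1].
  destruct (H2 (e/2) ltac:(lra)) as [N2 HN2]. exists (max N1 N2). intros n Hn.
  specialize (HN1 n ltac:(lia)). specialize (HN2 n ltac:(lia)). lra.
Qed.

Lemma LB_scale a c M : 0 < c -> LB a M -> LB (fun n => c * a n) (c * M).
Proof.
  intros hc H e he. destruct (H (e / c)) as [N HN].
  { apply Rdiv_lt_0_compat; lra. }
  exists N. intros n Hn. specialize (HN n Hn).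
  assert (c * (M - e / c) < c * a n) by (apply Rmult_lt_compat_l; lra).
  replace (c * (M - e / c)) with (c * M - e) in H0 by (field; lra). lra.
Qed.

Lemma LB_sub a phi M : (forall i, (i <= phi i)%nat) -> LB a M -> LB (fun i => a (phi i)) M.
Proof.
  intros Hp H e he. destruct (H e he) as [N HN]. exists N. intros n Hn.
  apply HN. specialize (Hp n). lia.
Qed.

Lemma LB_const a c : (forall n, c <= a n) -> LB a c.
Proof. intros H e he. exists O. intros n _. specialize (H n). lra. Qed.

Lemma cos_le_dec x y : 0 <= x -> x <= y -> y <= PI -> cos y <= cos x.
Proof.
  intros h1 h2 h3. destruct (Req_dec x y) as [->|hne]; [lra|].
  left. apply cos_decreasing_1; lra.
Qed.

Lemma cos_lip a b : Rabs (cos a - cos b) <= Rabs (a - b).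
Proof.
  assert (K : forall x y, x < y -> Rabs (cos y - cos x) <= Rabs (y - x)).
  { intros x y hxy. destruct (MVT_cor2 cos (fun t => - sin t) x y hxy) as [c [Hc _]].
    { intros c _. apply derivable_pt_lim_cos. }
    rewrite Hc, Rabs_mult. pose proof (SIN_bound c).
    assert (Rabs (- sin c) <= 1) by (rewrite Rabs_Ropp; apply Rabs_le; lra).
    pose proof (Rabs_pos (y - x)). nra. }
  destruct (Rtotal_order a b) as [h|[h|h]].
  - rewrite Rabs_minus_sym, (Rabs_minus_sym a). now apply K.
  - subst. rewrite !Rminus_diag, Rabs_R0. lra.
  - now apply K.
Qed.

Lemma cos_lt_1 x : 0 < x -> x <= PI -> cos x < 1.
Proof. intros. rewrite <- cos_0. apply cos_decreasing_1; lra. Qed.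

Lemma dot3_eq a1 a2 a3 b1 b2 b3 : dot3 (a1,a2,a3) (b1,b2,b3) = a1*b1+a2*b2+a3*b3.
Proof. reflexivity. Qed.

Lemma dot_bound a b : on_S2 a -> on_S2 b -> -1 <= dot3 a b <= 1.
Proof.
  destruct a as [[a1 a2] a3], b as [[b1 b2] b3]. unfold on_S2. rewrite !dot3_eq.
  intros Ha Hb.
  pose proof (Rle_0_sqr (a1-b1)). pose proof (Rle_0_sqr (a2-b2)). pose proof (Rle_0_sqr (a3-b3)).
  pose proof (Rle_0_sqr (a1+b1)). pose proof (Rle_0_sqr (a2+b2)). pose proof (Rle_0_sqr (a3+b3)).
  unfold Rsqr in *. split; nra.
Qed.

Lemma midpoint (X : Type) (d : X -> X -> R) c (Hm : is_metric d) (Hg : pi_geodesic d)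
  (Hc : CAT1_inequality d) (Hd : forall a b, d a b <= c) (hc : c < PI/2) (z1 z2 : X) :
  exists w, forall y, cos (d y z1) + cos (d y z2) <= 2 * cos (d z1 z2 / 2) * cos (d y w).
Proof.
  destruct Hm as [Hpos [Hzero [Hsym Htri]]].
  pose proof PI2_1 as HPI.
  destruct (Req_dec (d z1 z2) 0) as [H0|Hne].
  { exists z1. intro y. apply Hzero in H0. subst z2. rewrite (proj2 (Hzero z1 z1) eq_refl).
    replace (0/2) with 0 by field. rewrite cos_0. lra. }
  set (de := d z1 z2) in *.
  assert (hde : 0 < de) by (pose proof (Hpos z1 z2); fold de in H; lra).
  assert (hde2 : de <= c) by apply Hd.
  destruct (Hg z1 z2) as [gpq Hgpq]; [fold de; lra|].
  exists (gpq (de/2)). intro y.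
  destruct (Hg z2 y) as [gqr Hgqr]; [pose proof (Hd z2 y); lra|].
  destruct (Hg y z1) as [grp Hgrp]; [pose proof (Hd y z1); lra|].
  set (be := d y z1). set (ga := d z2 y).
  assert (hb0 : 0 <= be) by apply Hpos. assert (hg0 : 0 <= ga) by apply Hpos.
  assert (hb1 : be <= c) by apply Hd. assert (hg1 : ga <= c) by apply Hd.
  assert (t1 : ga <= de + be).
  { pose proof (Htri z2 z1 y). rewrite (Hsym z2 z1), (Hsym z1 y) in H. unfold ga, de, be; lra. }
  assert (t2 : de <= be + ga).
  { pose proof (Htri z1 y z2). rewrite (Hsym z1 y), (Hsym y z2) in H. unfold ga, de, be; lra. }
  assert (t3 : be <= ga + de).
  { pose proof (Htri y z2 z1). rewrite (Hsym y z2), (Hsym z2 z1) in H. unfold ga, de, be; lra. }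
  set (C := cos (de/2)).
  assert (hC : 0 < C) by (apply cos_gt_0; lra).
  assert (hcd : cos de = 2 * C * C - 1).
  { unfold C. rewrite <- cos_2a_cos. f_equal. field. }
  assert (hsd : 0 < sin de) by (apply sin_gt_0; lra).
  assert (hsb : 0 <= sin be) by (apply sin_ge_0; lra).
  pose proof (sin2_cos2 de) as pd. pose proof (sin2_cos2 be) as pb. unfold Rsqr in pd, pb.
  assert (up : cos ga <= cos de * cos be + sin de * sin be).
  { destruct (Rle_dec be de).
    - rewrite <- cos_minus. apply cos_le_dec; lra.
    - replace (cos de * cos be + sin de * sin be) with (cos (be - de))
        by (rewrite cos_minus; ring). apply cos_le_dec; lra. }
  assert (lo : cos de * cos be - sin de * sin be <= cos ga).
  { rewrite <- cos_plus. apply cos_le_dec; lra. }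
  set (wv := (cos ga - cos de * cos be) / sin de).
  assert (hwv : sin de * wv = cos ga - cos de * cos be) by (unfold wv; field; lra).
  assert (hwv2 : wv * wv <= sin be * sin be).
  { assert (Habs : Rabs wv <= sin be).
    { apply Rabs_le. split.
      - apply (Rmult_le_reg_l (sin de)); [lra|]. rewrite hwv. nra.
      - apply (Rmult_le_reg_l (sin de)); [lra|]. rewrite hwv. nra. }
    pose proof (Rabs_pos wv). assert (wv * wv = Rabs wv * Rabs wv).
    { rewrite <- Rabs_mult. rewrite Rabs_right; [ring|nra]. }
    nra. }
  set (h := sqrt (1 - cos be * cos be - wv * wv)).
  assert (hh : h * h = 1 - cos be * cos be - wv * wv) by (unfold h; apply sqrt_sqrt; nra).
  set (pbv := (1, 0, 0) : R3). set (qbv := (cos de, sin de, 0) : R3).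
  set (rbv := (cos be, wv, h) : R3).
  set (mbv := ((1 + cos de) / (2 * C), sin de / (2 * C), 0) : R3).
  assert (Spb : on_S2 pbv) by (unfold on_S2, pbv; rewrite dot3_eq; ring).
  assert (Sqb : on_S2 qbv) by (unfold on_S2, qbv; rewrite dot3_eq; nra).
  assert (Srb : on_S2 rbv) by (unfold on_S2, rbv; rewrite dot3_eq; nra).
  assert (Smb : on_S2 mbv).
  { unfold on_S2, mbv; rewrite dot3_eq. rewrite hcd. field_simplify; [|lra].
    replace (sin de ^ 2) with (1 - cos de * cos de) by nra. rewrite hcd. field. lra. }
  assert (acos_id : forall t, 0 <= t <= PI -> forall v, v = cos t -> acos v = t).
  { intros t ht v ->. now apply acos_cos. }
  assert (Dpq : dS2 pbv qbv = d z1 z2).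
  { unfold dS2, pbv, qbv. rewrite dot3_eq. apply acos_id; [fold de; lra|]. change (d z1 z2) with de. ring. }
  assert (Dqr : dS2 qbv rbv = d z2 y).
  { unfold dS2, qbv, rbv. rewrite dot3_eq. apply acos_id; [fold ga; lra|].
    change (d z2 y) with ga. nra. }
  assert (Drp : dS2 rbv pbv = d y z1).
  { unfold dS2, rbv, pbv. rewrite dot3_eq. apply acos_id; [fold be; lra|]. change (d y z1) with be; ring. }
  assert (Dpm : dS2 pbv mbv = de / 2).
  { unfold dS2, pbv, mbv. rewrite dot3_eq. apply acos_id; [lra|].
    fold C. rewrite hcd. field. lra. }
  assert (Dmq : dS2 mbv qbv = de - de / 2).
  { unfold dS2, mbv, qbv. rewrite dot3_eq. apply acos_id; [lra|].
    replace (de - de/2) with (de/2) by field. fold C.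
    replace (sin de / (2 * C) * sin de) with ((sin de * sin de) / (2 * C)) by (field; lra).
    replace (sin de * sin de) with (1 - cos de * cos de) by lra.
    rewrite hcd. field. lra. }
  assert (Drr : dS2 rbv rbv = 0).
  { unfold dS2. rewrite Srb. apply acos_1. }
  assert (Hineq : d (gpq (de/2)) y <= dS2 mbv rbv).
  { apply (Hc z1 z2 y gpq gqr grp Hgpq Hgqr Hgrp) with (pb := pbv) (qb := qbv) (rb := rbv).
    - pose proof (Hd z1 z2). pose proof (Hd z2 y). pose proof (Hd y z1). pose proof PI_RGT_0. lra.
    - exact Spb. - exact Sqb. - exact Srb. - exact Dpq. - exact Dqr. - exact Drp.
    - left. exists (de/2). split; [fold de; lra|]. split; [reflexivity|]. split; [exact Smb|].
      split; [exact Dpm|]. exact Dmq.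
    - right; left. exists (d z2 y). split; [pose proof (Hpos z2 y); lra|].
      split; [destruct Hgqr as [_ [Hr _]]; now rewrite Hr|]. split; [exact Srb|].
      split; [exact Dqr|]. rewrite Drr. ring. }
  assert (Dmr : dot3 mbv rbv = (cos be + cos ga) / (2 * C)).
  { unfold mbv, rbv. rewrite dot3_eq.
    replace (sin de / (2 * C) * wv) with ((sin de * wv) / (2 * C)) by (field; lra).
    rewrite hwv. field. lra. }
  pose proof (dot_bound mbv rbv Smb Srb) as Hdb.
  unfold dS2 in Hineq.
  assert (cos (acos (dot3 mbv rbv)) <= cos (d (gpq (de/2)) y)).
  { apply cos_le_dec; [apply Hpos | exact Hineq | apply acos_bound]. }
  rewrite cos_acos in H by exact Hdb. rewrite Dmr in H. rewrite (Hsym y (gpq (de/2))).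
  fold be. rewrite (Hsym y z2). fold ga. fold C.
  apply (Rmult_le_reg_r (/ (2 * C))). { apply Rinv_0_lt_compat; lra. }
  replace (2 * C * cos (d (gpq (de / 2)) y) * / (2 * C)) with (cos (d (gpq (de / 2)) y)) by (field; lra).
  replace ((cos be + cos ga) * / (2 * C)) with ((cos be + cos ga) / (2 * C)) by (field; lra).
  exact H.
Qed.

Definition fs {X : Type} (d : X -> X -> R) (y : nat -> X) (z : X) : nat -> R :=
  fun n => cos (d (y n) z).

Lemma cos_bounds {X : Type} (d : X -> X -> R) c (Hm : is_metric d) (Hd : forall a b, d a b <= c)
  (hc : c < PI/2) a b : cos c <= cos (d a b) <= 1.
Proof.
  destruct Hm as [Hpos _]. split; [|apply COS_bound].
  apply cos_le_dec; [apply Hpos| apply Hd| pose proof PI2_1; lra].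
Qed.

Lemma li_ex {X : Type} (d : X -> X -> R) c (Hm : is_metric d) (Hd : forall a b, d a b <= c)
  (hc : c < PI/2) y z : exists l, isli (fs d y z) l /\ cos c <= l <= 1.
Proof.
  assert (Hb : forall n, cos c <= fs d y z n <= 1) by (intro n; apply (cos_bounds d c Hm Hd hc)).
  destruct (LB_ex _ _ _ Hb) as [l Hl]. exists l. split; auto. exact (isli_bounds _ _ _ _ Hb Hl).
Qed.

Lemma LB_lip {X : Type} (d : X -> X -> R) (Hm : is_metric d) y z q l :
  LB (fs d y z) l -> LB (fs d y q) (l - d z q).
Proof.
  destruct Hm as [Hpos [Hzero [Hsym Htri]]]. intros H.
  apply (LB_mono _ (fun n => fs d y z n + - d z q)).
  - exists O. intros n _. unfold fs. pose proof (cos_lip (d (y n) z) (d (y n) q)).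
    pose proof (Htri (y n) z q). pose proof (Htri (y n) q z). rewrite (Hsym q z) in H2.
    assert (Rabs (d (y n) z - d (y n) q) <= d z q) by (apply Rabs_le; lra).
    pose proof (Rle_abs (cos (d (y n) z) - cos (d (y n) q))). lra.
  - replace (l - d z q) with (l + - d z q) by ring. apply LB_plus; auto.
    apply LB_const. intros; lra.
Qed.

Lemma LB_mid {X : Type} (d : X -> X -> R) c (Hm : is_metric d) (Hg : pi_geodesic d)
  (Hc : CAT1_inequality d) (Hd : forall a b, d a b <= c) (hc : c < PI/2) y z1 z2 :
  exists w, forall l1 l2, LB (fs d y z1) l1 -> LB (fs d y z2) l2 ->
    LB (fs d y w) ((l1 + l2) / (2 * cos (d z1 z2 / 2))).
Proof.
  destruct (midpoint X d c Hm Hg Hc Hd hc z1 z2) as [w Hw]. exists w.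
  intros l1 l2 H1 H2. set (C := cos (d z1 z2 / 2)).
  assert (hC : 0 < C).
  { unfold C. destruct Hm as [Hpos _]. pose proof (Hpos z1 z2). pose proof (Hd z1 z2).
    apply cos_gt_0; pose proof PI2_1; lra. }
  apply (LB_mono _ (fun n => / (2 * C) * (fs d y z1 n + fs d y z2 n))).
  - exists O. intros n _. unfold fs. specialize (Hw (y n)). fold C in Hw.
    apply (Rmult_le_reg_l (2 * C)); [lra|].
    replace (2 * C * (/ (2 * C) * (cos (d (y n) z1) + cos (d (y n) z2)))) with
      (cos (d (y n) z1) + cos (d (y n) z2)) by (field; lra). lra.
  - replace ((l1 + l2) / (2 * C)) with (/ (2 * C) * (l1 + l2)) by (field; lra).
    apply LB_scale; [apply Rinv_0_lt_compat; lra|]. now apply LB_plus.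
Qed.

Lemma center {X : Type} (d : X -> X -> R) c (Hm : is_metric d) (Hg : pi_geodesic d)
  (Hc : CAT1_inequality d) (Hd : forall a b, d a b <= c) (hc : c < PI/2)
  (Hcomp : complete d) (y : nat -> X) :
  exists q lq, isli (fs d y q) lq /\
    forall z lz, z <> q -> isli (fs d y z) lz -> lz < lq.
Proof.
  pose proof (proj1 Hm) as Hpos.
  assert (hc0 : 0 <= c) by (pose proof (Hpos (y O) (y O)); pose proof (Hd (y O) (y O)); lra).
  set (k := cos c).
  assert (hk : 0 < k) by (apply cos_gt_0; lra).
  set (E := fun s => exists z l, isli (fs d y z) l /\ s = l).
  destruct (completeness E) as [S HS].
  { exists 1. intros s [z [l [Hl ->]]].
    destruct (li_ex d c Hm Hd hc y z) as [l' [Hl' Hb]]. rewrite (isli_unique _ _ _ Hl Hl'). lra. }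
  { destruct (li_ex d c Hm Hd hc y (y O)) as [l' [Hl' Hb]]. exists l'. exists (y O), l'. auto. }
  assert (HE : forall z l, isli (fs d y z) l -> l <= S).
  { intros z l Hl. apply (proj1 HS). exists z, l. auto. }
  assert (HSk : k <= S).
  { destruct (li_ex d c Hm Hd hc y (y O)) as [l' [Hl' Hb]]. pose proof (HE _ _ Hl'). fold k in Hb. lra. }
  assert (Happ : forall e, 0 < e -> exists z l, isli (fs d y z) l /\ S - e < l).
  { intros e he. apply NNPP. intro Hn. assert (S <= S - e); [|lra].
    apply (proj2 HS). intros s [z [l [Hl ->]]]. apply Rnot_lt_le. intro Hlt. apply Hn.
    exists z, l. auto. }
  assert (Hch : forall m, {z | exists l, isli (fs d y z) l /\ S - (1/2)^m < l}).
  { intro m. apply constructive_indefinite_description.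
    destruct (Happ ((1/2)^m)) as [z [l [Hl Hlt]]]; [apply pow_lt; lra|]. exists z, l. auto. }
  set (zs := fun m => proj1_sig (Hch m)).
  assert (Hzs : forall m, exists l, isli (fs d y (zs m)) l /\ S - (1/2)^m < l)
    by (intro m; exact (proj2_sig (Hch m))).
  assert (Hmid : forall z1 z2 l1 l2, isli (fs d y z1) l1 -> isli (fs d y z2) l2 ->
             l1 + l2 <= 2 * cos (d z1 z2 / 2) * S).
  { intros z1 z2 l1 l2 H1 H2.
    destruct (LB_mid d c Hm Hg Hc Hd hc y z1 z2) as [w Hw].
    specialize (Hw l1 l2 (isli_LB _ _ H1) (isli_LB _ _ H2)).
    destruct (li_ex d c Hm Hd hc y w) as [lw [Hlw _]].
    pose proof (isli_max _ _ _ Hlw Hw). pose proof (HE _ _ Hlw).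
    assert (hC : 0 < cos (d z1 z2 / 2)).
    { pose proof (Hpos z1 z2). pose proof (Hd z1 z2). apply cos_gt_0; lra. }
    assert ((l1 + l2) / (2 * cos (d z1 z2 / 2)) <= S) by lra.
    apply (Rmult_le_reg_r (/ (2 * cos (d z1 z2 / 2)))); [apply Rinv_0_lt_compat; lra|].
    replace (2 * cos (d z1 z2 / 2) * S * / (2 * cos (d z1 z2 / 2))) with S by (field; lra).
    exact H3. }
  assert (Hcau : cauchy d zs).
  { intros e he. set (e' := Rmin e 1).
    assert (he' : 0 < e' <= e) by (unfold e'; split; [apply Rmin_glb_lt; lra | apply Rmin_l]).
    assert (he1 : e' <= 1) by apply Rmin_r.
    pose proof (cos_lt_1 (e'/2) ltac:(lra) ltac:(pose proof PI2_1; lra)) as Hc1.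
    set (eta := k * (1 - cos (e'/2))).
    assert (heta : 0 < eta) by (unfold eta; apply Rmult_lt_0_compat; lra).
    destruct (pow_lt_1_zero (1/2) ltac:(rewrite Rabs_right; lra) eta heta) as [N HN].
    exists N. intros m n Hm' Hn'.
    destruct (Hzs m) as [lm [Hlm Hlm2]]. destruct (Hzs n) as [ln [Hln Hln2]].
    pose proof (HN m Hm') as P1. pose proof (HN n Hn') as P2.
    rewrite Rabs_right in P1 by (apply Rle_ge, pow_le; lra).
    rewrite Rabs_right in P2 by (apply Rle_ge, pow_le; lra).
    pose proof (Hmid _ _ _ _ Hlm Hln) as Hmn.
    set (C := cos (d (zs m) (zs n) / 2)) in *.
    assert (HC : cos (e'/2) < C).
    { assert (2 * S - 2 * eta < 2 * C * S) by lra.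
      assert (S * (1 - cos (e'/2)) >= eta) by (unfold eta; apply Rle_ge, Rmult_le_compat_r; lra).
      nra. }
    pose proof (Hpos (zs m) (zs n)). pose proof (Hd (zs m) (zs n)).
    destruct (Rlt_dec (d (zs m) (zs n)) e'); [lra|].
    assert (C <= cos (e'/2)); [|lra].
    unfold C. apply cos_le_dec; lra. }
  destruct (Hcomp zs Hcau) as [q Hq].
  destruct (li_ex d c Hm Hd hc y q) as [lq [Hlq _]].
  assert (HqS : S <= lq).
  { apply Rnot_lt_le. intro Hlt. set (e := S - lq).
    destruct (pow_lt_1_zero (1/2) ltac:(rewrite Rabs_right; lra) (e/2) ltac:(unfold e; lra)) as [N1 HN1].
    destruct (Hq (e/2) ltac:(unfold e; lra)) as [N2 HN2].
    set (m := max N1 N2). destruct (Hzs m) as [lm [Hlm Hlm2]].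
    pose proof (HN1 m ltac:(unfold m; lia)) as P1. pose proof (HN2 m ltac:(unfold m; lia)) as P2.
    rewrite Rabs_right in P1 by (apply Rle_ge, pow_le; lra).
    pose proof (LB_lip d Hm y (zs m) q lm (isli_LB _ _ Hlm)) as HL.
    pose proof (isli_max _ _ _ Hlq HL). unfold e in *. lra. }
  exists q, lq. split; [exact Hlq|].
  intros z lz Hzq Hlz. apply Rnot_le_lt. intro Hle.
  pose proof (Hmid _ _ _ _ Hlz Hlq) as Hzq2.
  assert (hd : 0 < d z q).
  { pose proof (Hpos z q). destruct (Req_dec (d z q) 0) as [h|h]; [|lra].
    apply (proj1 (proj2 Hm)) in h. contradiction. }
  pose proof (Hd z q).
  assert (hC1 : cos (d z q / 2) < 1) by (apply cos_lt_1; pose proof PI2_1; lra).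
  assert (hC0 : 0 < cos (d z q / 2)) by (apply cos_gt_0; lra).
  nra.
Qed.

Lemma rec_step k a b u u' v' M' : 0 < k -> k <= a <= 1 -> k <= b <= 1 -> 0 < u' ->
  (a^2 * (1 + b^2) * b + b^2 * (1 + a^2) * a) * u' >= a^2 * (1 + b^2) * v' + b^2 * (1 + a^2) * u ->
  M' < v' -> M' - u' <= 2 / (k^2 + 2) * Rmax (M' - u) 0.
Proof.
  intros hk ha hb hu H Hv.
  set (A := a^2 * (1 + b^2)) in *. set (B := b^2 * (1 + a^2)) in *.
  assert (hA : k^2 <= A).
  { unfold A. assert (k^2 <= a^2) by (apply pow_incr; lra). pose proof (pow2_ge_0 b).
    pose proof (pow2_ge_0 a). nra. }
  assert (hB0 : 0 < B) by (unfold B; assert (k^2 <= b^2) by (apply pow_incr; lra); pose proof (pow2_ge_0 a); assert (0 < k^2) by (apply pow_lt; lra); nra).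
  assert (hB2 : B <= 2) by (unfold B; assert (b^2 <= 1) by (rewrite <- (pow1 2); apply pow_incr; lra); assert (a^2 <= 1) by (rewrite <- (pow1 2); apply pow_incr; lra); pose proof (pow2_ge_0 a); pose proof (pow2_ge_0 b); nra).
  assert (hk2 : 0 < k^2) by (apply pow_lt; lra).
  assert (H1 : (A + B) * u' >= A * v' + B * u).
  { assert ((A + B) * u' - (A * b + B * a) * u' = (A * (1 - b) + B * (1 - a)) * u') by ring.
    assert (0 <= (A * (1 - b) + B * (1 - a)) * u') by (apply Rmult_le_pos; nra). lra. }
  set (W := Rmax (M' - u) 0). assert (hW : M' - u <= W) by apply Rmax_l.
  assert (hW0 : 0 <= W) by apply Rmax_r.
  assert (H2 : (A + B) * (M' - u') <= B * W) by nra.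
  assert (H3 : B * (k^2 + 2) <= 2 * (A + B)) by nra.
  apply (Rmult_le_reg_l ((A + B) * (k^2 + 2))); [nra|].
  replace ((A + B) * (k ^ 2 + 2) * (2 / (k ^ 2 + 2) * W)) with (2 * (A + B) * W) by (field; lra).
  nra.
Qed.

Lemma rec2 k a b u u' v' e : 0 < k -> k <= a <= 1 -> k <= b <= 1 -> 0 <= u' -> 0 <= e ->
  u' - e <= u ->
  (a^2 * (1 + b^2) * b + b^2 * (1 + a^2) * a) * u' >= a^2 * (1 + b^2) * v' + b^2 * (1 + a^2) * u ->
  v' - 2 / k^2 * e <= u'.
Proof.
  intros hk ha hb hu he Hu H.
  set (A := a^2 * (1 + b^2)) in *. set (B := b^2 * (1 + a^2)) in *.
  assert (hA : k^2 <= A).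
  { unfold A. assert (k^2 <= a^2) by (apply pow_incr; lra). pose proof (pow2_ge_0 b).
    pose proof (pow2_ge_0 a). nra. }
  assert (hB0 : 0 < B) by (unfold B; assert (k^2 <= b^2) by (apply pow_incr; lra); pose proof (pow2_ge_0 a); assert (0 < k^2) by (apply pow_lt; lra); nra).
  assert (hB2 : B <= 2) by (unfold B; assert (b^2 <= 1) by (rewrite <- (pow1 2); apply pow_incr; lra); assert (a^2 <= 1) by (rewrite <- (pow1 2); apply pow_incr; lra); pose proof (pow2_ge_0 a); pose proof (pow2_ge_0 b); nra).
  assert (hk2 : 0 < k^2) by (apply pow_lt; lra).
  assert (H1 : A * u' >= A * v' - B * e).
  { assert (A * u' - (A * b + B * a - B) * u' = (A * (1 - b) + B * (1 - a)) * u') by ring.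
    assert (0 <= (A * (1 - b) + B * (1 - a)) * u') by (apply Rmult_le_pos; nra).
    assert (0 <= B * (u - u' + e)) by (apply Rmult_le_pos; lra). nra. }
  assert (H2 : B * e <= 2 / k^2 * e * A).
  { apply (Rmult_le_reg_l (k^2)); [lra|].
    replace (k ^ 2 * (2 / k ^ 2 * e * A)) with (2 * A * e) by (field; lra).
    assert (k^2 * B <= 2 * A) by nra.
    replace (k ^ 2 * (B * e)) with ((k^2 * B) * e) by ring. apply Rmult_le_compat_r; lra. }
  assert (0 < A) by lra.
  apply (Rmult_le_reg_l A); [lra|]. nra.
Qed.

Lemma limsup_unique a L1 L2 : is_limsup a L1 -> is_limsup a L2 -> L1 = L2.
Proof.
  intros H1 H2. destruct (Rtotal_order L1 L2) as [h|[h|h]]; auto; exfalso.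
  - destruct (H1 ((L2 - L1)/2) ltac:(lra)) as [[N HN] _].
    destruct (H2 ((L2 - L1)/2) ltac:(lra)) as [_ Hf]. destruct (Hf N) as [n [Hn Hn2]].
    specialize (HN n Hn). lra.
  - destruct (H2 ((L1 - L2)/2) ltac:(lra)) as [[N HN] _].
    destruct (H1 ((L1 - L2)/2) ltac:(lra)) as [_ Hf]. destruct (Hf N) as [n [Hn Hn2]].
    specialize (HN n Hn). lra.
Qed.

Lemma conv a c l : c < PI/2 -> (forall n, 0 <= a n <= c) -> isli (fun n => cos (a n)) l ->
  0 <= l -> l <= 1 -> is_limsup a (acos l).
Proof.
  intros hc Ha Hl hl0 hl1. pose proof PI2_1 as HP.
  set (L := acos l). pose proof (acos_bound l) as HLb. fold L in HLb.
  assert (HcL : cos L = l) by (apply cos_acos; lra).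
  assert (HL2 : L <= PI/2).
  { apply Rnot_lt_le. intro h. pose proof (cos_decreasing_1 (PI/2) L ltac:(lra) ltac:(lra) ltac:(lra) ltac:(lra) h).
    rewrite cos_PI2 in H. lra. }
  intros e he. split.
  - set (e' := Rmin e (PI/2)).
    assert (he' : 0 < e' <= e) by (unfold e'; split; [apply Rmin_glb_lt; lra|apply Rmin_l]).
    assert (he2 : e' <= PI/2) by apply Rmin_r.
    pose proof (cos_decreasing_1 L (L + e') ltac:(lra) ltac:(lra) ltac:(lra) ltac:(lra) ltac:(lra)) as Hc.
    destruct (isli_LB _ _ Hl (l - cos (L + e')) ltac:(lra)) as [N HN].
    exists N. intros n Hn. specialize (HN n Hn). specialize (Ha n).
    assert (a n < L + e'); [|lra].
    apply (cos_decreasing_0 (L + e') (a n)); lra.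
  - intros N. destruct (Rlt_dec (L - e) 0) as [h|h].
    + exists N. split; auto. specialize (Ha N). lra.
    + pose proof (cos_decreasing_1 (L - e) L ltac:(lra) ltac:(lra) ltac:(lra) ltac:(lra) ltac:(lra)) as Hc.
      destruct (isli_freq _ _ Hl (cos (L - e) - l) ltac:(lra) N) as [n [Hn Hn2]].
      exists n. split; auto. specialize (Ha n).
      apply (cos_decreasing_0 (a n) (L - e)); lra.
Qed.

Lemma mono_isli (c : nat -> R) s phi : (forall n, c n <= c (S n)) ->
  is_lub (fun v => exists n, v = c n) s -> (forall i, (i <= phi i)%nat) ->
  isli (fun i => c (phi i)) s.
Proof.
  intros Hmono [Hu Hl] Hphi.
  assert (Hm : forall n m, (n <= m)%nat -> c n <= c m).
  { intros n m Hnm. induction Hnm; [lra|]. specialize (Hmono m). lra. }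
  split.
  - intros M HM. apply Rnot_lt_le. intro h.
    destruct (HM (M - s) ltac:(lra)) as [N HN]. specialize (HN N (le_n _)).
    assert (c (phi N) <= s) by (apply Hu; eauto). lra.
  - intros b Hb. apply Hb. intros e he.
    assert (exists n, s - e < c n) as [n Hn].
    { apply NNPP. intro Hn. assert (s <= s - e); [|lra]. apply Hl. intros v [n ->].
      apply Rnot_lt_le. intro h. apply Hn. eauto. }
    exists n. intros i Hi. specialize (Hm n (phi i) ltac:(specialize (Hphi i); lia)). lra.
Qed.

Theorem corollary4p7 (X : Type) (d : X -> X -> R) (T : X -> X)
  (HX : CAT1_space d) (Hcomplete : complete d) (Hdiam : diam_lt d (PI / 2))
  (HT : firmly_vicinal d T) :
  forall x : X, exists p : X, T p = p /\ Delta_convergent d (fun n => Nat.iter n T x) p.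
Proof.
  intros x. destruct HX as [Hm [Hg Hc]]. destruct Hdiam as [c [hc Hd]].
  pose proof Hm as [Hpos [Hzero [Hsym Htri]]].
  pose proof PI2_1 as HP.
  assert (hc0 : 0 <= c) by (pose proof (Hpos x x); pose proof (Hd x x); lra).
  set (k := cos c).
  assert (hk : 0 < k) by (apply cos_gt_0; lra).
  assert (Hcb : forall a b, k <= cos (d a b) <= 1) by (intros; apply (cos_bounds d c Hm Hd hc)).
  assert (hk1 : k <= 1) by (destruct (Hcb x x); lra).
  set (xs := fun n => Nat.iter n T x).
  assert (FV : forall n z,
    (cos (d (xs (S n)) (xs n)) ^ 2 * (1 + cos (d (T z) z) ^ 2) * cos (d (T z) z) +
     cos (d (T z) z) ^ 2 * (1 + cos (d (xs (S n)) (xs n)) ^ 2) * cos (d (xs (S n)) (xs n))) *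
       cos (d (xs (S n)) (T z)) >=
    cos (d (xs (S n)) (xs n)) ^ 2 * (1 + cos (d (T z) z) ^ 2) * cos (d (xs (S n)) z) +
    cos (d (T z) z) ^ 2 * (1 + cos (d (xs (S n)) (xs n)) ^ 2) * cos (d (xs n) (T z))).
  { intros n z. pose proof (HT (xs n) z) as H. cbv zeta in H.
    rewrite (Hsym (T z) (xs n)) in H. exact H. }
  assert (Step1 : forall z M, LB (fs d xs z) M -> LB (fs d xs (T z)) M).
  { intros z M HM. apply LB_eps. intros e he.
    set (M' := M - e/2). destruct (HM (e/2) ltac:(lra)) as [N HN].
    set (rho := 2 / (k^2 + 2)).
    assert (hk2 : 0 < k^2) by (apply pow_lt; lra).
    assert (hrho : 0 <= rho < 1).
    { unfold rho. split; [apply Rlt_le, Rdiv_lt_0_compat; lra|].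
      apply (Rmult_lt_reg_r (k^2 + 2)); [lra|]. unfold Rdiv. rewrite Rmult_assoc, Rinv_l; lra. }
    set (W := Rmax (M' - fs d xs (T z) N) 0).
    assert (hW0 : 0 <= W) by apply Rmax_r.
    assert (Hind : forall j, M' - fs d xs (T z) (N + j) <= rho ^ j * W).
    { induction j as [|j IH].
      - rewrite Nat.add_0_r. simpl. rewrite Rmult_1_l. apply Rmax_l.
      - rewrite Nat.add_succ_r.
        assert (Hv : M' < fs d xs z (S (N + j))) by (unfold M'; apply HN; lia).
        pose proof (rec_step k (cos (d (xs (S (N+j)%nat)) (xs (N+j)%nat))) (cos (d (T z) z))
          (fs d xs (T z) (N + j)) (fs d xs (T z) (S (N + j))) (fs d xs z (S (N + j))) M'
          hk (Hcb _ _) (Hcb _ _) ltac:(unfold fs; destruct (Hcb (xs (S (N+j)%nat)) (T z)); lra)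
          (FV (N + j)%nat z) Hv) as Hs.
        fold rho in Hs.
        assert (Rmax (M' - fs d xs (T z) (N + j)) 0 <= rho ^ j * W).
        { apply Rmax_lub; [exact IH|]. apply Rmult_le_pos; [apply pow_le; lra|lra]. }
        simpl. assert (rho * Rmax (M' - fs d xs (T z) (N + j)) 0 <= rho * (rho ^ j * W))
          by (apply Rmult_le_compat_l; lra). lra. }
    destruct (pow_lt_1_zero rho ltac:(rewrite Rabs_right; lra) (e / 2 / (W + 1)))
      as [J HJ].
    { apply Rdiv_lt_0_compat; lra. }
    intros e2 he2. exists (N + J)%nat. intros n Hn.
    specialize (HJ (n - N)%nat ltac:(lia)). specialize (Hind (n - N)%nat).
    replace (N + (n - N))%nat with n in Hind by lia.
    rewrite Rabs_right in HJ by (apply Rle_ge, pow_le; lra).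
    assert (rho ^ (n - N) * W <= rho ^ (n - N) * (W + 1))
      by (apply Rmult_le_compat_l; [apply pow_le|]; lra).
    assert (rho ^ (n - N) * (W + 1) < e / 2).
    { apply (Rmult_lt_compat_r (W + 1)) in HJ; [|lra].
      replace (e / 2 / (W + 1) * (W + 1)) with (e/2) in HJ by (field; lra). exact HJ. }
    unfold M' in Hind. lra. }
  assert (KF : forall p, T p = p -> forall z, cos (d (T z) z) * cos (d (T z) p) >= cos (d z p)).
  { intros p Hp z. pose proof (HT z p) as H. cbv zeta in H. rewrite Hp in H.
    rewrite (proj2 (Hzero p p) eq_refl), cos_0 in H. rewrite (Hsym p z) in H.
    set (a := cos (d (T z) z)) in *. set (u := cos (d (T z) p)) in *.
    assert (ha : 0 < 1 + a^2) by (pose proof (pow2_ge_0 a); lra).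
    assert ((1 + a^2) * (a * u) >= (1 + a^2) * cos (d z p)).
    { replace ((1 + a^2) * (a * u)) with
        ((a ^ 2 * (1 + 1 ^ 2) * 1 + 1 ^ 2 * (1 + a ^ 2) * a) * u - a ^ 2 * (1 + 1 ^ 2) * u) by ring.
      replace ((1 + a^2) * cos (d z p)) with (1 ^ 2 * (1 + a ^ 2) * cos (d z p)) by ring. lra. }
    apply Rle_ge. apply (Rmult_le_reg_l (1 + a^2)); lra. }
  assert (Step2 : forall p, T p = p ->
    (exists s, forall phi, (forall i, (i <= phi i)%nat) -> isli (fun i => fs d xs p (phi i)) s) /\
    (forall eps, 0 < eps -> exists N, forall n, (N <= n)%nat -> d (xs n) (xs (S n)) < eps)).
  { intros p Hp.
    assert (Hmono : forall n, fs d xs p n <= fs d xs p (S n)).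
    { intro n. pose proof (KF p Hp (xs n)) as H. unfold fs.
      change (T (xs n)) with (xs (S n)) in H.
      destruct (Hcb (xs (S n)) (xs n)). destruct (Hcb (xs (S n)) p). nra. }
    destruct (completeness (fun v => exists n, v = fs d xs p n)) as [s Hs].
    { exists 1. intros v [n ->]. apply Hcb. }
    { exists (fs d xs p O). eauto. }
    split.
    { exists s. intros phi Hphi. now apply mono_isli. }
    assert (Hsk : k <= s).
    { destruct (Hcb (xs O) p). assert (fs d xs p O <= s) by (apply (proj1 Hs); eauto).
      unfold fs in *. lra. }
    assert (Hm' : forall n m, (n <= m)%nat -> fs d xs p n <= fs d xs p m).
    { intros n m Hnm. induction Hnm; [lra|]. specialize (Hmono m). lra. }
    intros eps heps. set (e' := Rmin eps 1).
    assert (he' : 0 < e' <= eps) by (unfold e'; split; [apply Rmin_glb_lt; lra|apply Rmin_l]).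
    assert (he1 : e' <= 1) by apply Rmin_r.
    pose proof (cos_lt_1 e' ltac:(lra) ltac:(lra)) as Hc1.
    set (eta := k * (1 - cos e')).
    assert (heta : 0 < eta) by (unfold eta; apply Rmult_lt_0_compat; lra).
    assert (exists N, s - eta < fs d xs p N) as [N HN].
    { apply NNPP. intro Hn. assert (s <= s - eta); [|lra]. apply (proj2 Hs). intros v [n ->].
      apply Rnot_lt_le. intro h. apply Hn. eauto. }
    exists N. intros n Hn.
    pose proof (KF p Hp (xs n)) as H. change (T (xs n)) with (xs (S n)) in H.
    assert (H1 : fs d xs p (S n) <= s) by (apply (proj1 Hs); eauto).
    pose proof (Hm' N n Hn) as H2. unfold fs in H1, H2, HN.
    set (a := cos (d (xs (S n)) (xs n))) in *.
    destruct (Hcb (xs (S n)) (xs n)) as [ha1 ha2]. fold a in ha1, ha2.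
    assert (Ha : a * s > s - eta) by nra.
    assert (Ha2 : s * cos e' <= s - eta) by (unfold eta; nra).
    assert (Ha3 : cos e' < a) by nra.
    rewrite Hsym. destruct (Rlt_dec (d (xs (S n)) (xs n)) e'); [lra|].
    assert (a <= cos e'); [|lra].
    unfold a. apply cos_le_dec; [lra|lra|]. pose proof (Hd (xs (S n)) (xs n)). lra. }
  assert (Step3 : forall p, T p = p -> forall phi, (forall i, (i <= phi i)%nat) ->
    forall q M, LB (fun i => fs d xs q (phi i)) M -> LB (fun i => fs d xs (T q) (phi i)) M).
  { intros p Hp phi Hphi q M HM e he.
    destruct (Step2 p Hp) as [_ Hreg].
    assert (hk2 : 0 < k^2) by (apply pow_lt; lra).
    destruct (HM (e/2) ltac:(lra)) as [N1 HN1].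
    destruct (Hreg (k^2 / 2 * (e / 2))) as [N2 HN2].
    { apply Rmult_lt_0_compat; lra. }
    exists (max N1 (S N2)). intros i Hi. specialize (HN1 i ltac:(lia)).
    pose proof (Hphi i) as Hpi.
    destruct (phi i) as [|m] eqn:E; [lia|].
    specialize (HN2 m ltac:(lia)).
    assert (Hl : fs d xs (T q) (S m) - d (xs m) (xs (S m)) <= fs d xs (T q) m).
    { unfold fs. pose proof (cos_lip (d (xs (S m)) (T q)) (d (xs m) (T q))).
      pose proof (Htri (xs (S m)) (xs m) (T q)). pose proof (Htri (xs m) (xs (S m)) (T q)).
      rewrite (Hsym (xs (S m)) (xs m)) in H0.
      assert (Rabs (d (xs (S m)) (T q) - d (xs m) (T q)) <= d (xs m) (xs (S m))) by (apply Rabs_le; lra).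
      pose proof (Rle_abs (cos (d (xs (S m)) (T q)) - cos (d (xs m) (T q)))). lra. }
    pose proof (rec2 k (cos (d (xs (S m)) (xs m))) (cos (d (T q) q))
      (fs d xs (T q) m) (fs d xs (T q) (S m)) (fs d xs q (S m)) (d (xs m) (xs (S m)))
      hk (Hcb _ _) (Hcb _ _) ltac:(unfold fs; destruct (Hcb (xs (S m)) (T q)); lra)
      (Hpos _ _) Hl (FV m q)) as Hr.
    assert (2 / k^2 * d (xs m) (xs (S m)) < e / 2).
    { apply (Rmult_lt_reg_l (k^2)); [lra|].
      replace (k ^ 2 * (2 / k ^ 2 * d (xs m) (xs (S m)))) with (2 * d (xs m) (xs (S m))) by (field; lra).
      lra. }
    lra. }
  destruct (center d c Hm Hg Hc Hd hc Hcomplete xs) as [p [lp [Hlp Hpu]]].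
  assert (Hp : T p = p).
  { destruct (classic (T p = p)) as [h|h]; auto. exfalso.
    destruct (li_ex d c Hm Hd hc xs (T p)) as [lT [HlT _]].
    pose proof (Step1 p lp (isli_LB _ _ Hlp)) as H1.
    pose proof (isli_max _ _ _ HlT H1). pose proof (Hpu (T p) lT h HlT). lra. }
  exists p. split; [exact Hp|].
  intros phi Hphi.
  assert (Hphi' : forall i, (i <= phi i)%nat).
  { induction i; [lia|]. specialize (Hphi i). lia. }
  set (y := fun i => xs (phi i)).
  destruct (center d c Hm Hg Hc Hd hc Hcomplete y) as [q [lq [Hlq Hqu]]].
  assert (Hq : T q = q).
  { destruct (classic (T q = q)) as [h|h]; auto. exfalso.
    destruct (li_ex d c Hm Hd hc y (T q)) as [lT [HlT _]].
    pose proof (Step3 p Hp phi Hphi' q lq (isli_LB _ _ Hlq)) as H1.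
    pose proof (isli_max _ _ _ HlT H1). pose proof (Hqu (T q) lT h HlT). lra. }
  assert (Hqp : q = p).
  { destruct (classic (q = p)) as [h|h]; auto. exfalso.
    destruct (Step2 p Hp) as [[sp Hsp] _]. destruct (Step2 q Hq) as [[sq Hsq] _].
    pose proof (Hsp phi Hphi') as A1. pose proof (Hsp (fun i => i) (fun i => le_n i)) as A2.
    pose proof (Hsq phi Hphi') as A3. pose proof (Hsq (fun i => i) (fun i => le_n i)) as A4.
    pose proof (Hqu p sp (not_eq_sym h) A1).
    pose proof (isli_unique _ _ _ Hlq A3).
    pose proof (Hpu q sq h A4).
    pose proof (isli_unique _ _ _ Hlp A2). lra. }
  subst q.
  assert (Hbd : forall z n, 0 <= d (y n) z <= c) by (intros; split; [apply Hpos|apply Hd]).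
  assert (Hfb : forall z n, k <= fs d y z n <= 1) by (intros; apply Hcb).
  exists (acos lq). split.
  { pose proof (isli_bounds _ _ _ _ (Hfb p) Hlq).
    apply (conv (fun n => d (y n) p) c); [exact hc | intro n; apply Hbd | exact Hlq | lra | lra]. }
  intros z Hz Lz HLz.
  destruct (li_ex d c Hm Hd hc y z) as [lz [Hlz Hlzb]]. fold k in Hlzb.
  pose proof (isli_bounds _ _ _ _ (Hfb p) Hlq) as Hlqb.
  assert (HLz2 : is_limsup (fun n => d (y n) z) (acos lz)).
  { apply (conv (fun n => d (y n) z) c); [exact hc | intro n; apply Hbd | exact Hlz | lra | lra]. }
  rewrite (limsup_unique _ _ _ HLz HLz2).
  pose proof (Hqu z lz Hz Hlz).
  apply Rnot_le_lt. intro hle.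
  pose proof (acos_bound lz). pose proof (acos_bound lq).
  pose proof (cos_le_dec (acos lz) (acos lq) ltac:(lra) hle ltac:(lra)) as Hcc.
  rewrite !cos_acos in Hcc by lra. lra.
Qed.
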